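(* Let $A$ be a replete general event structure. Then the map $\max_A:\mathit{ges}(\mathit{er}(A))\to A$ is an isomorphism of general event structures.
   Context: A general event structure $(E,\mathrm{Con},\vdash)$: $\mathrm{Con}$ a nonempty subset-closed family of finite subsets of $E$; $\vdash\subseteq\mathrm{Con}\times E$ with $Y\in\mathrm{Con}$, $X\subseteq Y$, $X\vdash e\Rightarrow Y\vdash e$. Configurations: subsets that are consistent (finite subsets in $\mathrm{Con}$) and secured (each $e\in x$ has $e_1,\dots,e_n=e$ in $x$ with $\{e_1,\dots,e_{i-1}\}\vdash e_i$); $\mathcal C(E)$ denotes finite configurations, $\mathcal C^\infty(E)$ all. It is replete iff every $e$ has some $X\in\mathrm{Con}$ with $X\vdash e$; every $X\in\mathrm{Con}$ is contained in some finite configuration; and whenever $X\vdash e$ there is a finite configuration $x$ with $e\in x\subseteq X\cup\{e\}$. Maps of general event structures: partial functions $f$ such that $X\in\mathrm{Con}\Rightarrow fX\in\mathrm{Con}'$ and $f$ is injective on $X$, and $X\vdash e$ with $f(e)$ defined implies $fX\vdash' f(e)$. Event structure with equivalence (ese): a prime event structure $(P,\le,\mathrm{Con})$ (partial order with finite down-sets $[p]$, subset-closed nonempty $\mathrm{Con}$ of finite sets containing singletons, with $X\in\mathrm{Con}$, $e\le e'\in X\Rightarrow X\cup\{e\}\in\mathrm{Con}$) together with an equivalence $\equiv$ on $P$. $\mathit{ges}(P)$: events are $\equiv$-classes; a set of classes $X$ is consistent iff it is the set of classes of some $Y\in\mathrm{Con}$; $X\vdash e$ iff $X$ is consistent and $e=\{p\}_\equiv$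 for some $p$ whose down-set's classes lie in $X\cup\{e\}$. Causal realisations of a family $\mathcal A$ with $A=\bigcup\mathcal A$: partial order $(E,\le)$ with finite down-sets and $\rho:E\to A$ mapping down-closed sets into $\mathcal A$; maps: partial surjections preserving down-closed sets and commuting with $\rho$ where defined; $\rho'\preceq\rho$ iff there is a map $\rho\to\rho'$; extremal: every total map out of it is an isomorphism. $\mathit{er}(A)$: events a chosen representative per isomorphism class of extremal realisations of $\mathcal C^\infty(A)$ with a top element, $\max_A(p)$ the image of the top; order $\preceq$; finite $X$ consistent iff $\max_A$ of its down-closure is in $\mathcal C^\infty(A)$; $p\equiv p'$ iff $\max_A(p)=\max_A(p')$. $\max_A:\mathit{ges}(\mathit{er}(A))\to A$ sends the class of $p$ to $\max_A(p)$. *)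

(* Defs.v *)
From mathcomp Require Import all_boot.
Set Implicit Arguments. Unset Strict Implicit. Unset Printing Implicit Defensive.

Definition pset (T : Type) := T -> Prop.
Definition psubset (T : Type) (X Y : pset T) : Prop := forall x, X x -> Y x.
Definition pfinite (T : Type) (X : pset T) : Prop :=
  exists n (f : 'I_n -> T), forall x, X x -> exists i, f i = x.
Definition pimage (T U : Type) (f : T -> option U) (X : pset T) : pset U :=
  fun b => exists a, X a /\ f a = Some b.

Record gesd := GESD {
  gev : Type;
  gCon : pset (pset gev);
  gent : pset gev -> gev -> Prop
}.
Arguments gCon : clear implicits.
Arguments gent : clear implicits.

Definition is_ges (A : gesd) : Prop :=
  (forall X, gCon A X -> pfinite X) /\
  (exists X, gCon A X) /\
  (forall X Y, gCon A Y -> psubset X Y -> gCon A X) /\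
  (forall X e, gent A X e -> gCon A X) /\
  (forall X Y e, gCon A Y -> psubset X Y -> gent A X e -> gent A Y e).

Definition consistent (A : gesd) (x : pset (gev A)) : Prop :=
  forall X, pfinite X -> psubset X x -> gCon A X.

Definition secured (A : gesd) (x : pset (gev A)) : Prop :=
  forall e, x e -> exists (n : nat) (s : nat -> gev A),
    0 < n /\ s n.-1 = e /\ (forall i, i < n -> x (s i)) /\
    (forall i, i < n -> gent A (fun a => exists j, j < i /\ s j = a) (s i)).

Definition config (A : gesd) (x : pset (gev A)) : Prop :=
  consistent x /\ secured x.
Definition fconfig (A : gesd) (x : pset (gev A)) : Prop :=
  config x /\ pfinite x.

Definition replete (A : gesd) : Prop :=
  (forall e, exists X, gCon A X /\ gent A X e) /\
  (forall X, gCon A X -> exists x, fconfig x /\ psubset X x) /\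
  (forall X e, gent A X e ->
     exists x, fconfig x /\ x e /\ psubset x (fun a => X a \/ a = e)).

Definition ges_map (A B : gesd) (f : gev A -> option (gev B)) : Prop :=
  (forall X, gCon A X ->
     gCon B (pimage f X) /\
     (forall a b c, X a -> X b -> f a = Some c -> f b = Some c -> a = b)) /\
  (forall X e e', gent A X e -> f e = Some e' -> gent B (pimage f X) e').

Definition ges_iso (A B : gesd) (f : gev A -> option (gev B)) : Prop :=
  ges_map f /\
  exists g : gev B -> option (gev A), ges_map g /\
    (forall a, obind g (f a) = Some a) /\ (forall b, obind f (g b) = Some b).

Record freal (T : Type) := FReal {
  fr_n : nat;
  fr_le : 'I_fr_n -> 'I_fr_n -> Prop;
  fr_rho : 'I_fr_n -> T
}.
Arguments fr_n {T}.
Arguments fr_le {T} f : rename.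
Arguments fr_rho {T} f : rename.

Definition downclosed (T : Type) (r : freal T) (D : pset 'I_(fr_n r)) : Prop :=
  forall a b, D b -> fr_le r a b -> D a.
Arguments downclosed {T} r D.

(* a causal realisation of C^oo(A): partial order, rho maps down-closed sets
   to configurations (down-sets are automatically finite) *)
Definition is_real (A : gesd) (r : freal (gev A)) : Prop :=
  (forall a, fr_le r a a) /\
  (forall a b, fr_le r a b -> fr_le r b a -> a = b) /\
  (forall a b c, fr_le r a b -> fr_le r b c -> fr_le r a c) /\
  (forall D, downclosed r D ->
     config (fun e => exists a, D a /\ fr_rho r a = e)).

Definition rmap (T : Type) (r r' : freal T)
    (f : 'I_(fr_n r) -> option 'I_(fr_n r')) : Prop :=
  (forall b, exists a, f a = Some b) /\
  (forall D, downclosed r D -> downclosed r' (pimage f D)) /\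
  (forall a b, f a = Some b -> fr_rho r' b = fr_rho r a).

Definition rtotal (T : Type) (r r' : freal T)
    (f : 'I_(fr_n r) -> option 'I_(fr_n r')) : Prop :=
  forall a, exists b, f a = Some b.

Definition riso (T : Type) (r r' : freal T)
    (f : 'I_(fr_n r) -> option 'I_(fr_n r')) : Prop :=
  rmap f /\ exists g : 'I_(fr_n r') -> option 'I_(fr_n r), rmap g /\
    (forall a, obind g (f a) = Some a) /\ (forall b, obind f (g b) = Some b).

Definition risomorphic (T : Type) (r r' : freal T) : Prop :=
  exists f, @riso T r r' f.

Definition extremal (A : gesd) (r : freal (gev A)) : Prop :=
  forall (r' : freal (gev A)) (f : 'I_(fr_n r) -> option 'I_(fr_n r')),
    is_real r' -> rmap f -> rtotal f -> riso f.

Definition has_top (T : Type) (r : freal T) : Prop :=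
  exists t, forall a, fr_le r a t.

Definition rmax (T : Type) (r : freal T) (e : T) : Prop :=
  exists t, (forall a, fr_le r a t) /\ fr_rho r t = e.

Definition er_pred (A : gesd) (r : freal (gev A)) : Prop :=
  is_real r /\ extremal r /\ has_top r.

Definition erev (A : gesd) : Type :=
  { C : pset (freal (gev A)) |
    exists r, er_pred r /\ forall r', C r' <-> (is_real r' /\ risomorphic r r') }.

Definition er_le (A : gesd) (p q : erev A) : Prop :=
  exists rp rq (f : 'I_(fr_n rq) -> option 'I_(fr_n rp)),
    proj1_sig p rp /\ proj1_sig q rq /\ rmap f.

Definition er_max (A : gesd) (p : erev A) (e : gev A) : Prop :=
  exists r, proj1_sig p r /\ rmax r e.

Definition er_Con (A : gesd) (X : pset (erev A)) : Prop :=
  pfinite X /\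
  config (fun e => exists p q, X p /\ er_le q p /\ er_max q e).

Definition er_eqv (A : gesd) (p q : erev A) : Prop :=
  exists e, er_max p e /\ er_max q e.

Definition eseclass (P : Type) (eqv : P -> P -> Prop) : Type :=
  { C : pset P | exists p, forall q, C q <-> eqv p q }.

Definition ese_Con (P : Type) (Con : pset (pset P)) (eqv : P -> P -> Prop)
    (X : pset (eseclass eqv)) : Prop :=
  exists Y, Con Y /\ forall c, X c <-> exists y, Y y /\ proj1_sig c y.

Definition ese_ent (P : Type) (le : P -> P -> Prop) (Con : pset (pset P))
    (eqv : P -> P -> Prop) (X : pset (eseclass eqv)) (c : eseclass eqv) : Prop :=
  ese_Con Con X /\
  exists p, proj1_sig c p /\
    forall q, le q p -> exists d : eseclass eqv, proj1_sig d q /\ (X d \/ d = c).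

Definition ges_of_ese (P : Type) (le : P -> P -> Prop) (Con : pset (pset P))
    (eqv : P -> P -> Prop) : gesd :=
  @GESD (eseclass eqv) (@ese_Con P Con eqv) (@ese_ent P le Con eqv).

Definition ges_er (A : gesd) : gesd :=
  ges_of_ese (@er_le A) (@er_Con A) (@er_eqv A).

Definition maxA_graph (A : gesd) (c : gev (ges_er A)) (e : gev A) : Prop :=
  exists p : erev A, proj1_sig (c : eseclass (@er_eqv A)) p /\ er_max p e.

(* Main.v *)
Require Import Defs.
From mathcomp Require Import all_boot zify.
From Stdlib Require Import Classical ClassicalEpsilon ProofIrrelevance FunctionalExtensionality PropExtensionality.
Set Implicit Arguments. Unset Strict Implicit. Unset Printing Implicit Defensive.

Definition decb (P : Prop) : bool := if excluded_middle_informative P then true else false.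
Lemma decbP (P : Prop) : reflect P (decb P).
Proof. rewrite /decb; case: excluded_middle_informative => h; constructor; done. Qed.

Lemma pset_ext T (X Y : pset T) : (forall x, X x <-> Y x) -> X = Y.
Proof. move=> h; apply: functional_extensionality => x; apply: propositional_extensionality; exact: h. Qed.

Section Real.
Variable T : Type.
Implicit Types r : freal T.

Lemma rmap_reflect r r' (f : 'I_(fr_n r) -> option 'I_(fr_n r')) a b y :
  (forall a, fr_le r a a) -> (forall a b c, fr_le r a b -> fr_le r b c -> fr_le r a c) ->
  rmap f -> f a = Some b -> fr_le r' y b -> exists x, fr_le r x a /\ f x = Some y.
Proof.
move=> hre htr [_ [hd _]] fab yb.
have hD : downclosed r (fun x => fr_le r x a) by move=> u v hv hu; exact: htr hu hv.
have := hd _ hD y b; case.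
- by exists a; split.
- exact: yb.
by move=> x [hx fx]; exists x.
Qed.

Definition ocomp (X Y Z : Type) (f : X -> option Y) (g : Y -> option Z) := fun x => obind g (f x).

Lemma rmap_id r : @rmap T r r (fun a => Some a).
Proof.
split; first by move=> b; exists b.
split; last by move=> a b [<-].
move=> D hD a b [b' [Db' [<-]]] ab; exists a; split => //; exact: hD ab.
Qed.

Lemma rmap_comp r1 r2 r3 f g : @rmap T r1 r2 f -> @rmap T r2 r3 g -> rmap (ocomp f g).
Proof.
move=> [sf [df rf]] [sg [dg rg]]; split.
- move=> c; have [b gb] := sg c; have [a fa] := sf b; exists a; by rewrite /ocomp fa.
split.
- move=> D hD.
  have -> : pimage (ocomp f g) D = pimage g (pimage f D).
    apply: pset_ext => c; split.
    + move=> [a [Da]]; rewrite /ocomp; case fa: (f a) => [b|] //= gb.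
      by exists b; split => //; exists a.
    + by move=> [b [[a [Da fa]] gb]]; exists a; rewrite /ocomp fa.
  exact/dg/df.
move=> a c; rewrite /ocomp; case fa: (f a) => [b|] //= gb.
by rewrite (rg _ _ gb) (rf _ _ fa).
Qed.

Lemma obind_inv (X Y : Type) (f : X -> option Y) (g : Y -> option X) a :
  obind g (f a) = Some a -> exists b, f a = Some b /\ g b = Some a.
Proof. by case: (f a) => [b|] //= h; exists b. Qed.

Lemma riso_id r : @riso T r r (fun a => Some a).
Proof. split; first exact: rmap_id. exists (fun a => Some a); split => //; exact: rmap_id. Qed.

Lemma riso_sym r r' f : @riso T r r' f -> exists g, @riso T r' r g.
Proof. move=> [hf [g [hg [h1 h2]]]]; exists g; split => //; exists f; done. Qed.

Lemma riso_comp r1 r2 r3 f g : @riso T r1 r2 f -> @riso T r2 r3 g -> riso (ocomp f g).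
Proof.
move=> [hf [f' [hf' [f1 f2]]]] [hg [g' [hg' [g1 g2]]]].
split; first exact: rmap_comp hf hg.
exists (ocomp g' f'); split; first exact: rmap_comp hg' hf'.
split.
- move=> a; have [b [fa f'b]] := obind_inv (f1 a).
  have [c [gb g'c]] := obind_inv (g1 b).
  by rewrite /ocomp fa /= gb /= g'c /= f'b.
- move=> c; have [b [g'c gb]] := obind_inv (g2 c).
  have [a [f'b fa]] := obind_inv (f2 b).
  by rewrite /ocomp g'c /= f'b /= fa /= gb.
Qed.

Lemma risomorphic_sym r r' : @risomorphic T r r' -> risomorphic r' r.
Proof. move=> [f /riso_sym [g hg]]; by exists g. Qed.
Lemma risomorphic_trans r1 r2 r3 : @risomorphic T r1 r2 -> risomorphic r2 r3 -> risomorphic r1 r3.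
Proof. move=> [f hf] [g hg]; exists (ocomp f g); exact: riso_comp. Qed.

End Real.

Lemma restrict (A : gesd) (r : freal (gev A)) (b : 'I_(fr_n r)) : is_real r ->
  exists r0 : freal (gev A), is_real r0 /\ rmax r0 (fr_rho r b) /\
    (exists f, @rmap _ r r0 f) /\ fr_n r0 <= fr_n r /\
    ((exists y, ~ fr_le r y b) -> fr_n r0 < fr_n r).
Proof.
move=> [hre [han [htr hcf]]].
pose P : {pred 'I_(fr_n r)} := [pred x | decb (fr_le r x b)].
have Pb : b \in P.
  by rewrite /P unfold_in /=; apply/decbP; apply: hre.
pose ev := @enum_val _ P.
pose rk := enum_rank_in Pb.
have evP : forall i, fr_le r (ev i) b by move=> i; exact/decbP/(enum_valP i).
have evK : forall i, rk (ev i) = i by move=> i; exact: enum_valK_in.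
have rkK : forall x, fr_le r x b -> ev (rk x) = x.
  by move=> x hx; apply: enum_rankK_in; exact/decbP.
exists (FReal (fun i j => fr_le r (ev i) (ev j)) (fun i => fr_rho r (ev i))).
split.
  split; first by move=> a /=.
  split; first by move=> a c /= h1 h2; apply: enum_val_inj; exact: han.
  split; first by move=> a c d /=; exact: htr.
  move=> D0 hD0 /=.
  pose D := fun x => fr_le r x b /\ D0 (rk x).
  have hD : downclosed r D.
    move=> u v [vb Dv] uv; split; first exact: htr uv vb.
    apply: (hD0 _ (rk v)) => //=; rewrite rkK ?rkK //; exact: htr uv vb.
  have := hcf D hD.
  have -> // : (fun e => exists a, D a /\ fr_rho r a = e) =
      (fun e => exists a, D0 a /\ fr_rho r (ev a) = e).
  apply: pset_ext => e; split.
  - by move=> [a [[ab Da] <-]]; exists (rk a); rewrite rkK.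
  - by move=> [a [Da <-]]; exists (ev a); split => //; split; rewrite ?evK.
split.
  by exists (rk b) => /=; split; [move=> a; rewrite rkK //; apply: hre | rewrite rkK].
split.
  have evIn : forall i, ev i \in P := fun i => enum_valP i.
  exists (fun x => if x \in P then Some (rk x) else None).
  split.
    by move=> i; exists (ev i); rewrite evIn evK.
  split.
    move=> D hD i j /= [x [Dx]]; case: ifP => // Px [<-] ji.
    have xb : fr_le r x b by move: Px => /decbP.
    exists (ev i); split; first by apply: hD ji; rewrite rkK.
    by rewrite evIn evK.
  by move=> x i /=; case: ifP => // Px [<-]; rewrite rkK //; apply/decbP.
split; first by rewrite /= -[X in _ <= X]card_ord max_card.
move=> [y yb] /=.
rewrite -[X in _ < X]card_ord -(cardC P).
rewrite -[X in X < _]addn0 ltn_add2l; apply/card_gt0P; exists y.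
rewrite !inE; apply/negP => /decbP; done.
Qed.

Definition pairs T (r : freal T) : nat :=
  #|[set p : 'I_(fr_n r) * 'I_(fr_n r) | decb (fr_le r p.1 p.2)]|.

Lemma pairs_le T (r : freal T) : pairs r <= fr_n r * fr_n r.
Proof. by rewrite /pairs; have := max_card [set p : 'I_(fr_n r) * 'I_(fr_n r) | decb (fr_le r p.1 p.2)]; rewrite card_prod !card_ord. Qed.

Lemma size_rmap (A : gesd) (q r' : freal (gev A)) f : is_real q -> @rmap _ q r' f -> rtotal f ->
  fr_n r' <= fr_n q /\ (fr_n r' = fr_n q -> pairs r' <= pairs q /\ (pairs r' = pairs q -> riso f)).
Proof.
move=> [hre [han [htr hcf]]] hf ht.
have [sf [df rf]] := hf.
pose g y := proj1_sig (constructive_indefinite_description _ (sf y)).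
have fg : forall y, f (g y) = Some y by move=> y; rewrite /g; case: constructive_indefinite_description.
have ginj : injective g by move=> y1 y2 e; have := fg y1; rewrite e fg => -[].
have hle := @leq_card _ _ g ginj; rewrite !card_ord in hle.
split => // eqn.
have [h gh hg] : bijective g by apply: (@inj_card_bij _ _ g ginj); rewrite !card_ord eqn.
have fh : forall a, f a = Some (h a) by move=> a; rewrite -{1}(hg a) fg.
pose gg := fun p : 'I_(fr_n r') * 'I_(fr_n r') => (g p.1, g p.2).
have gginj : injective gg by move=> [a1 a2] [b1 b2] [/ginj -> /ginj ->].
pose S' := [set p : 'I_(fr_n r') * 'I_(fr_n r') | decb (fr_le r' p.1 p.2)].
pose S := [set p : 'I_(fr_n q) * 'I_(fr_n q) | decb (fr_le q p.1 p.2)].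
have sub : gg @: S' \subset S.
  apply/subsetP => p /imsetP [[y z] /=]; rewrite inE => /decbP /= yz ->.
  rewrite inE /=; apply/decbP.
  have [x [xa fx]] := rmap_reflect hre htr hf (fg z) yz.
  have hx : h x = y by have := fh x; rewrite fx => -[].
  by rewrite -hx hg.
have cardS : pairs r' = #|gg @: S'| by rewrite card_imset.
split; first by rewrite cardS /pairs -/S subset_leq_card.
move=> eqp.
have eqS : gg @: S' =i S by apply/subset_cardP => //; rewrite -cardS.
split => //.
exists (fun y => Some (g y)); split; last by split=> [a|b]; rewrite ?fh /= ?hg ?fg.
split; first by move=> b; exists (h b); rewrite hg.
split.
  move=> D hD b a [y [Dy [<-]]] ab.
  have : (b, g y) \in S by rewrite inE; apply/decbP.
  rewrite -eqS => /imsetP [[y1 z1] /=]; rewrite inE => /decbP /= yz [e1 /ginj e2].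
  subst; exists y1; split => //; exact: hD yz.
by move=> a b [<-]; rewrite (rf _ _ (fg a)).
Qed.

Lemma mu_lt n1 n2 p1 : n1 < n2 -> p1 <= n1 * n1 -> n1 * (n1 * n1 + 1) + p1 < n2 * (n2 * n2 + 1).
Proof.
move=> h1 h2.
have h3 : n1.+1 * (n1.+1 * n1.+1 + 1) <= n2 * (n2 * n2 + 1).
  by apply: leq_mul => //; rewrite leq_add2r; apply: leq_mul.
apply: leq_trans h3. nia.
Qed.

Definition mu T (q : freal T) := fr_n q * (fr_n q * fr_n q + 1) + pairs q.

Lemma key (A : gesd) (r : freal (gev A)) b : is_real r ->
  exists rq, er_pred rq /\ rmax rq (fr_rho r b) /\ exists f, @rmap _ r rq f.
Proof.
move=> hr.
have [r0 [hr0 [hm0 [[f0 hf0] _]]]] := restrict b hr.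
move: (fr_rho r b) hm0 => e hm0.
suff : forall N (q : freal (gev A)), mu q < N -> is_real q -> rmax q e ->
  (exists g, @rmap _ r q g) -> exists rq, er_pred rq /\ rmax rq e /\ exists f, @rmap _ r rq f.
  by move=> /(_ (mu r0).+1 r0 (ltnSn _) hr0 hm0); apply; exists f0.
elim=> [//|N IH] q hmu hq hqm [g hg].
case: (classic (extremal q)) => hext.
  exists q; split; last by split => //; exists g.
  split => //; split => //; have [t [ht _]] := hqm; by exists t.
have [r' [f [hr' [hf [htot hni]]]]] : exists r' f, is_real r' /\ @rmap _ q r' f /\ rtotal f /\ ~ riso f.
  apply: NNPP => H; apply: hext => r' f h1 h2 h3; apply: NNPP => h4; apply: H.
  by exists r', f.
have [t [ht te]] := hqm.
have [t' ft] := htot t.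
have [_ [_ rf]] := hf.
have e' : fr_rho r' t' = e by rewrite (rf _ _ ft).
have [hsz1 hsz2] := size_rmap hq hf htot.
have hgf := rmap_comp hg hf.
case: (classic (forall y, fr_le r' y t')) => htop.
  apply: (IH r') => //; last by exists (ocomp g f).
  - suff h : mu r' < mu q by rewrite -ltnS; exact: leq_trans h hmu.
    rewrite /mu.
    case: (ltngtP (fr_n r') (fr_n q)) => hn.
    + exact: leq_trans (mu_lt hn (pairs_le _)) (leq_addr _ _).
    + by move: hsz1; rewrite leqNgt hn.
    + have [hp1 hp2] := hsz2 hn; rewrite hn ltn_add2l ltn_neqAle hp1 andbT.
      by apply/eqP => /hp2.
  - by exists t'.
have [y hy] : exists y, ~ fr_le r' y t' by apply: NNPP => H; apply: htop => y; apply: NNPP => h; apply: H; exists y.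
have [r'' [hr'' [hm'' [[f'' hf''] [_ hlt]]]]] := restrict t' hr'.
apply: (IH r'') => //.
- suff h : mu r'' < mu q by rewrite -ltnS; exact: leq_trans h hmu.
  have hn : fr_n r'' < fr_n q by apply: leq_trans (hlt _) hsz1; exists y.
  exact: leq_trans (mu_lt hn (pairs_le _)) (leq_addr _ _).
- by rewrite -e'.
- by exists (ocomp (ocomp g f) f''); apply: rmap_comp hgf hf''.
Qed.

Section Er.
Variable A : gesd.
Implicit Types (p q : erev A) (r : freal (gev A)).

Lemma erev_real p r : proj1_sig p r -> is_real r.
Proof. by case: p => C [r0 [_ h]] /= /h []. Qed.

Lemma erev_iso p r1 r2 : proj1_sig p r1 -> proj1_sig p r2 -> exists f, @riso _ r1 r2 f.
Proof.
case: p => C [r0 [_ h]] /= /h [_ h1] /h [_ h2].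
exact: risomorphic_trans (risomorphic_sym h1) h2.
Qed.

Lemma erev_rep p : exists r, proj1_sig p r /\ er_pred r.
Proof.
case: p => C [r0 [h0 h]] /=; exists r0; split => //; apply/h; split; first by case: h0.
by exists (fun a => Some a); exact: riso_id.
Qed.

Lemma rmax_iso r r' f e : is_real r' -> @riso _ r r' f -> rmax r e -> rmax r' e.
Proof.
move=> [hre [_ [htr _]]] [hf [g [hg [h1 h2]]]] [t [ht te]].
have [t' [ft gt']] := obind_inv (h1 t).
exists t'; split; last by have [_ [_ rf]] := hf; rewrite (rf _ _ ft).
move=> y.
have [sf _] := hf; have [x fx] := sf y.
have [y' [y't gy']] := rmap_reflect hre htr hg gt' (ht x).
have := h2 y'; rewrite gy' /= fx => -[->]; done.
Qed.

Lemma rmax_uniq r e1 e2 : is_real r -> rmax r e1 -> rmax r e2 -> e1 = e2.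
Proof.
move=> [_ [han _]] [t1 [h1 <-]] [t2 [h2 <-]].
by rewrite (han _ _ (h2 t1) (h1 t2)).
Qed.

Lemma er_max_mem p e r : er_max p e -> proj1_sig p r -> rmax r e.
Proof.
move=> [r1 [p1 m1]] pr; have [f hf] := erev_iso p1 pr.
exact: rmax_iso (erev_real pr) hf m1.
Qed.

Lemma er_max_uniq p e1 e2 : er_max p e1 -> er_max p e2 -> e1 = e2.
Proof.
move=> h1 [r [pr m2]]; exact: rmax_uniq (erev_real pr) (er_max_mem h1 pr) m2.
Qed.

Lemma er_max_ex p : exists e, er_max p e.
Proof.
have [r [pr [_ [_ [t ht]]]]] := erev_rep p.
by exists (fr_rho r t); exists r; split => //; exists t.
Qed.

Definition ev r (H : er_pred r) : erev A :=
  exist _ (fun r' => is_real r' /\ risomorphic r r') (ex_intro _ r (conj H (fun _ => iff_refl _))).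

Lemma ev_mem r (H : er_pred r) : proj1_sig (ev H) r.
Proof. split; first by case: H. by exists (fun a => Some a); exact: riso_id. Qed.

Lemma er_le_intro q p rq rp f : proj1_sig q rq -> proj1_sig p rp -> @rmap _ rp rq f -> er_le q p.
Proof. by move=> h1 h2 h3; exists rq, rp, f. Qed.

Lemma er_le_elim q p rq rp : er_le q p -> proj1_sig q rq -> proj1_sig p rp ->
  exists f, @rmap _ rp rq f.
Proof.
move=> [rq1 [rp1 [f [q1 [p1 hf]]]]] q2 p2.
have [g [hg _]] := erev_iso p2 p1.
have [h [hh _]] := erev_iso q1 q2.
exists (ocomp (ocomp g f) h); apply: rmap_comp hh; exact: rmap_comp hg hf.
Qed.

Lemma er_le_refl p : er_le p p.
Proof. have [r [pr _]] := erev_rep p; apply: (er_le_intro pr pr (rmap_id r)). Qed.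

Lemma er_le_trans q p s : er_le q p -> er_le p s -> er_le q s.
Proof.
move=> h1 h2.
have [rq [qr _]] := erev_rep q; have [rp [pr _]] := erev_rep p; have [rs [sr _]] := erev_rep s.
have [f hf] := er_le_elim h1 qr pr; have [g hg] := er_le_elim h2 pr sr.
exact: er_le_intro qr sr (rmap_comp hg hf).
Qed.

Lemma rmap_rho_surj r r' f : @rmap _ r r' f -> forall b, exists a, fr_rho r a = fr_rho r' b.
Proof. move=> [sf [_ rf]] b; have [a fa] := sf b; exists a; by rewrite (rf _ _ fa). Qed.

Lemma er_down q p r e : er_le q p -> proj1_sig p r -> er_max q e -> exists a, fr_rho r a = e.
Proof.
move=> hle pr [rq [qr [t [_ <-]]]].
have [f hf] := er_le_elim hle qr pr; exact: rmap_rho_surj hf t.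
Qed.

Lemma er_up p r b : proj1_sig p r -> exists q, er_le q p /\ er_max q (fr_rho r b).
Proof.
move=> pr; have [rq [hq [hm [f hf]]]] := key b (erev_real pr).
exists (ev hq); split; first exact: er_le_intro (ev_mem hq) pr hf.
by exists rq; split => //; exact: ev_mem.
Qed.

End Er.

Lemma chain_ex (A : gesd) (x : pset (gev A)) e : config x -> x e ->
  exists r : freal (gev A), is_real r /\ rmax r e /\ (forall a, x (fr_rho r a)).
Proof.
move=> [hcons hsec] xe.
have [[|n] [s [hn [sn [sx sent]]]]] := hsec e xe => //.
exists (@FReal _ n.+1 (fun i j : 'I_n.+1 => (i <= j)%N) (fun i : 'I_n.+1 => s i)).
split; last first.
  split; last by move=> a /=; apply: sx.
  by exists ord_max; split => [a|] /=; [rewrite -ltnS | ].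
split; first by move=> a /=.
split; first by move=> a b /= h1 h2; apply: val_inj; apply/eqP; rewrite eqn_leq h1 h2.
split; first by move=> a b c /=; exact: leq_trans.
move=> D hD /=; split.
  move=> X hX hsub; apply: hcons => // y /hsub [a [_ <-]]; exact: sx.
move=> e' [a [Da <-]].
exists a.+1, s; split => //; split => //; split.
  move=> i hi; have hi' : i < n.+1 by apply: leq_trans hi (ltn_ord a).
  exists (Ordinal hi'); split => //; apply: (hD _ _ Da) => /=; by rewrite -ltnS.
move=> i hi; apply: sent; exact: leq_trans hi (ltn_ord a).
Qed.

Lemma er_from_config (A : gesd) (x : pset (gev A)) e : config x -> x e ->
  exists p : erev A, er_max p e /\ forall q e', er_le q p -> er_max q e' -> x e'.
Proof.
move=> hx xe.
have [r [hr [[t [ht te]] hxr]]] := chain_ex hx xe.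
have [rq [hq [hm [f hf]]]] := key t hr.
exists (ev hq); split; first by exists rq; split; [exact: ev_mem | rewrite -te].
move=> q e' hle hqm.
have [a <-] := er_down hle (ev_mem hq) hqm.
have [a' <-] := rmap_rho_surj hf a; exact: hxr.
Qed.

Lemma min_ex (P : nat -> Prop) : (exists n, P n) -> exists n, P n /\ forall m, m < n -> ~ P m.
Proof.
move=> [n Pn]; apply: NNPP => H.
suff : forall k m, m <= k -> ~ P m by move/(_ n n (leqnn n)).
elim=> [|k IH] m hm Pm; apply: H; exists m; split => // m' hm'.
  by move: hm' (leq_trans hm' hm).
apply: IH; by rewrite -ltnS; apply: leq_trans hm' hm.
Qed.

Section Cls.
Variable A : gesd.

Lemma cls_eq (c1 c2 : eseclass (@er_eqv A)) :
  (forall q, proj1_sig c1 q <-> proj1_sig c2 q) -> c1 = c2.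
Proof.
case: c1 c2 => [C1 h1] [C2 h2] /= h.
have e := pset_ext h; subst; f_equal; exact: proof_irrelevance.
Qed.

Lemma cls_char (c : eseclass (@er_eqv A)) y e : proj1_sig c y -> er_max y e ->
  forall q, proj1_sig c q <-> er_max q e.
Proof.
case: c => [C [p0 h]] /= /h [e1 [m1 my]] mye q.
have ee := er_max_uniq my mye; subst e1.
split.
- by move=> /h [e2 [m2 mq]]; rewrite (er_max_uniq m1 m2).
- by move=> mq; apply/h; exists e.
Qed.

Lemma maxA_char (c : eseclass (@er_eqv A)) e : maxA_graph c e -> forall q, proj1_sig c q <-> er_max q e.
Proof. move=> [p [cp mp]]; exact: cls_char cp mp. Qed.

Lemma maxA_ex (c : eseclass (@er_eqv A)) : exists e, maxA_graph c e.
Proof.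
case: c => [C [p0 h]]; have [e me] := er_max_ex p0.
by exists e, p0; split => //=; apply/h; exists e.
Qed.

Lemma maxA_uniq (c : gev (ges_er A)) e1 e2 : maxA_graph c e1 -> maxA_graph c e2 -> e1 = e2.
Proof. move=> h1 [p [cp m2]]; exact: er_max_uniq ((maxA_char h1 p).1 cp) m2. Qed.

Lemma cls_proof e : (exists p : erev A, er_max p e) ->
  exists p, forall q, er_max q e <-> er_eqv p q.
Proof.
move=> [p mp]; exists p => q; split; first by move=> mq; exists e.
by move=> [e' [m1 m2]]; rewrite (er_max_uniq mp m1).
Qed.

Definition cls e (h : exists p : erev A, er_max p e) : eseclass (@er_eqv A) :=
  exist _ (fun q => er_max q e) (cls_proof h).

End Cls.

Theorem mainTheorem3 (A : gesd) (hA : is_ges A) (hrep : replete A) :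
  exists F : gev (ges_er A) -> option (gev A),
    (forall c e, F c = Some e <-> maxA_graph c e) /\ ges_iso F.
Proof.
have [hfin [_ [_ [hentcon hmono]]]] := hA.
have [hrep1 [hrep2 hrep3]] := hrep.
pose F := fun c : gev (ges_er A) => Some (proj1_sig (constructive_indefinite_description _ (maxA_ex c))).
have HF : forall c e, F c = Some e <-> maxA_graph c e.
  move=> c e; rewrite /F; case: constructive_indefinite_description => e0 h0 /=.
  split; first by move=> [<-].
  by move=> h; rewrite (maxA_uniq h0 h).
have Finj : forall c1 c2 e, F c1 = Some e -> F c2 = Some e -> c1 = c2.
  move=> c1 c2 e /HF h1 /HF h2; apply: cls_eq => q.
  by rewrite (maxA_char h1 q) (maxA_char h2 q).
pose mx := fun q : erev A => proj1_sig (constructive_indefinite_description _ (er_max_ex q)).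
have mxP : forall q, er_max q (mx q) by move=> q; rewrite /mx; case: constructive_indefinite_description.
have hex : forall e, exists p : erev A, er_max p e.
  move=> e; have [X [_ hXe]] := hrep1 e.
  have [x [[hx _] [xe _]]] := hrep3 _ _ hXe.
  by have [p [mp _]] := er_from_config hx xe; exists p.
have FCon : forall X, gCon (ges_er A) X -> gCon A (pimage F X).
  move=> X [Y [[[k [h hh]] [hMcons _]] hXY]].
  apply: hMcons.
  - exists k, (fun i => mx (h i)) => e [c [Xc /HF Fc]].
    have [y [Yy cy]] := (hXY c).1 Xc.
    have mye := (maxA_char Fc y).1 cy.
    have [i hi] := hh y Yy; exists i; rewrite hi; exact: er_max_uniq (mxP y) mye.
  - move=> e [c [Xc /HF Fc]].
    have [y [Yy cy]] := (hXY c).1 Xc.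
    by exists y, y; split => //; split; [exact: er_le_refl | exact: (maxA_char Fc y).1 cy].
pose G := fun e => Some (cls (hex e)).
have GCon : forall X, gCon A X -> gCon (ges_er A) (pimage G X).
  move=> X gX.
  have [x [[xcfg _] Xx]] := hrep2 X gX.
  have hpe : forall e, exists p : erev A, er_max p e /\
      (X e -> forall q e', er_le q p -> er_max q e' -> x e').
    move=> e; case: (classic (X e)) => Xe.
      have [p [mp hp]] := er_from_config xcfg (Xx e Xe); by exists p.
    by have [p mp] := hex e; exists p.
  pose pe := fun e => proj1_sig (constructive_indefinite_description _ (hpe e)).
  have peP : forall e, er_max (pe e) e /\ (X e -> forall q e', er_le q (pe e) -> er_max q e' -> x e').
    by move=> e; rewrite /pe; case: constructive_indefinite_description.
  exists (fun p => exists e, X e /\ p = pe e); split; last first.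
    move=> c; split.
    - move=> [e [Xe [<-]]]; exists (pe e); split; first by exists e.
      exact: (peP e).1.
    - move=> [y [[e [Xe ->]] cy]]; exists e; split => //; congr Some.
      apply: cls_eq => q /=; rewrite (cls_char cy (peP e).1 q); done.
  split.
    have [k [h hh]] := hfin X gX; exists k, (fun i => pe (h i)).
    by move=> y [e [Xe ->]]; have [i <-] := hh e Xe; exists i.
  split.
    move=> Z hZ hsub; apply: (xcfg.1) => // e' /hsub [p [q [[e [Xe ->]] [hle hm]]]].
    exact: (peP e).2 Xe q e' hle hm.
  move=> e' [p [q [[e [Xe ->]] [hle hm]]]].
  have [r [qr [hr _]]] := erev_rep q.
  have [t [ht te]] := er_max_mem hm qr.
  have [_ [_ [_ hcf]]] := hr.
  have [_ hsec] := hcf (fun _ => True) (fun _ _ _ _ => I).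
  have [n [s [hn [sn [sx sent]]]]] := hsec e' (ex_intro _ t (conj I te)).
  exists n, s; split => //; split => //; split => // i hi.
  have [b [_ hb]] := sx i hi.
  have [q' [hle' hm']] := er_up b qr.
  exists (pe e), q'; split; first by exists e.
  split; first exact: er_le_trans hle' hle.
  by rewrite -hb.
exists F; split => //.
split.
  split.
    move=> X hX; split; first exact: FCon.
    by move=> a b c _ _ h1 h2; exact: Finj h1 h2.
  move=> X c e' [hXc [p [cp hall]]] /HF Fc.
  have mpe := (maxA_char Fc p).1 cp.
  have [r [pr hr]] := erev_rep p.
  have [t [ht te]] := er_max_mem mpe pr.
  have [hreal _] := hr.
  have [_ [_ [_ hcf]]] := hreal.
  have [_ hsec] := hcf (fun _ => True) (fun _ _ _ _ => I).
  have [n [s [hn [sn [sx sent]]]]] := hsec e' (ex_intro _ t (conj I te)).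
  have [i0 [si0 hmin]] := min_ex (ex_intro (fun i => s i = e') n.-1 sn).
  have hi0 : i0 < n.
    case: (ltnP n.-1 i0) => h; first by case: (hmin _ h).
    by apply: leq_ltn_trans h _; rewrite prednK.
  have := sent _ hi0; rewrite si0 => hZ.
  apply: hmono hZ; first exact: FCon.
  move=> a [j [hj <-]].
  have [b [_ hb]] := sx j (ltn_trans hj hi0).
  have [q [hle hm]] := er_up b pr.
  have [d [dq [Xd | dc]]] := hall q hle.
  - exists d; split => //; apply/HF; exists q; split => //; by rewrite -hb.
  - subst d; have := (maxA_char Fc q).1 dq => mq.
    have := er_max_uniq hm mq; rewrite hb => /(hmin _ hj); done.
exists G; split.
  split.
    move=> X hX; split; first exact: GCon.
    move=> a b c _ _ ha hb.
    have e1 : cls (hex a) = cls (hex b) by move: ha hb; rewrite /G => -[->] [].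
    have eab := congr1 (@proj1_sig _ _) e1; simpl in eab.
    have [p mp] := hex a.
    have : er_max p b by move: mp; change ((fun q => er_max q a) p -> (fun q => er_max q b) p); rewrite eab.
    exact: er_max_uniq mp.
  move=> X e c' hXe [<-].
  split; first by apply: GCon; exact: hentcon hXe.
  have [x [[hx _] [xe xsub]]] := hrep3 _ _ hXe.
  have [p [mp hp]] := er_from_config hx xe.
  exists p; split => // q hle.
  have [e'' m''] := er_max_ex q.
  exists (cls (hex e'')); split => //.
  case: (xsub _ (hp _ _ hle m'')) => [Xe'' | ->]; last by right.
  by left; exists e''.
split.
  move=> c; case Fc: (F c) => [e|] /=; last by [].
  have /HF hm := Fc; congr Some; apply: cls_eq => q /=; by rewrite (maxA_char hm q).
move=> e /=; apply/HF; have [p mp] := hex e; by exists p.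
Qed.
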